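(* For every graph $H$ (with at least one edge), there exists a constant $c(H) > 0$ such that $p_c(n,H) \geqslant c(H)\, n^{-1/\lambda^*(H)}$ for every $n \in \mathbb{N}$.
   Context: $\lambda^*(H) := \min_{e \in E(H)} \max_{F \subset H - e} \frac{e(F)}{v(F)}$, the maximum being over (nonempty) subgraphs $F$ of $H - e$. The $H$-bootstrap process on $K_n$ starting from $G \subset E(K_n)$: $G_0 = G$, $G_{t+1} = G_t \cup \{e \in E(K_n) : \exists\, H' \cong H,\ e \in H' \subset G_t \cup \{e\}\}$; $\langle G\rangle_H = \bigcup_t G_t$. $G_{n,p}$ is the Erdős–Rényi random graph. $p_c(n,H) = \inf\{p : \mathbb{P}(\langle G_{n,p}\rangle_H = K_n) \geqslant 1/2\}$. *)

(* Defs.v *)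
From HB Require Import structures.
From mathcomp Require Import all_boot all_order all_algebra.
From mathcomp Require Import all_classical all_reals exp.
Set Implicit Arguments. Unset Strict Implicit. Unset Printing Implicit Defensive.
Import Order.TTheory GRing.Theory Num.Theory.
Local Open Scope ring_scope.


Definition simple_graph (V : finType) (H : {set {set V}}) : Prop :=
  forall e, e \in H -> #|e| = 2%N.

(* max over nonempty subgraphs F = (S, D) of H - e of e(F)/v(F):
   S nonempty vertex set, D a subset of E(H) \ {e} with all edges inside S.
   (0 is a harmless neutral element: all densities are >= 0 and V is nonempty
   when H has an edge.) *)
Definition maxdens (R : realType) (V : finType) (H : {set {set V}}) (e : {set V}) : R :=
  \big[Num.max/0]_(F : {set V} * {set {set V}} |
        [&& F.1 != finset.set0, F.2 \subset H :\ e & [forall d in F.2, d \subset F.1]])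
     ((#|F.2|)%:R / (#|F.1|)%:R).

(* lambda^*(H) = min_{e in E(H)} maxdens H e.  The neutral element #|E(H)| is an
   upper bound of every density e(F)/v(F) (as v(F) >= 1), so for H with an
   edge this is exactly the minimum. *)
Definition lambda_star (R : realType) (V : finType) (H : {set {set V}}) : R :=
  \big[Num.min/(#|H|)%:R]_(e in H) maxdens R H e.

Definition Kn (n : nat) : {set {set 'I_n}} := [set e : {set 'I_n} | #|e| == 2%N].

Definition copy_edges (V : finType) (n : nat) (H : {set {set V}}) (f : V -> 'I_n)
  : {set {set 'I_n}} := [set f @: d | d : {set V} in H].

Definition boot_step (V : finType) (n : nat) (H : {set {set V}})
  (G : {set {set 'I_n}}) : {set {set 'I_n}} :=
  G :|: [set e in Kn n | [exists f : {ffun V -> 'I_n},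
           [&& injectiveb f, e \in copy_edges H f
             & copy_edges H f \subset G :|: [set e]]]].

Definition percolates (V : finType) (n : nat) (H : {set {set V}})
  (G : {set {set 'I_n}}) : Prop :=
  forall e, e \in Kn n -> exists t : nat, e \in iter t (boot_step H) G.

Definition prob_perc (R : realType) (V : finType) (n : nat) (H : {set {set V}})
  (p : R) : R :=
  \sum_(G : {set {set 'I_n}} | G \subset Kn n)
     (if `[< percolates H G >] then p ^+ #|G| * (1 - p) ^+ (#|Kn n| - #|G|) else 0).

Definition p_c (R : realType) (V : finType) (n : nat) (H : {set {set V}}) : R :=
  inf [set p : R | 0 <= p <= 1 /\ 2^-1 <= prob_perc n H p]%classic.

(* Main.v *)
Require Import Defs.
From HB Require Import structures.
From mathcomp Require Import all_boot all_order all_algebra.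
From mathcomp Require Import all_classical all_reals exp.
Import Order.TTheory GRing.Theory Num.Theory.
Local Open Scope ring_scope.

Lemma up_sum (R : realType) (X : finType) (A B : {set X}) (p : R) :
  0 <= p <= 1 -> B \subset A ->
  \sum_(G : {set X} | (G \subset A) && (B \subset G))
     p ^+ #|G| * (1 - p) ^+ (#|A| - #|G|) <= p ^+ #|B|.
Proof.
move=> /andP[p0 p1] BA.
have q0 : 0 <= 1 - p by rewrite subr_ge0.
pose a := fun (i : X) (b : bool) => if b then (if i \in A then p else 0)
   else (if i \in B then 0 else if i \in A then 1 - p else 1).
have a0 : forall i b, 0 <= a i b.
  by move=> i [|]; rewrite /a; do ! case: ifP => //.
have E1 : \prod_i (\sum_(b : bool) a i b) = p ^+ #|B|.
  rewrite -(prodr_const (mem B) p) [RHS]big_mkcond /=; apply: eq_bigr => i _.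
  rewrite big_bool /a /=; have [iB|iB] := boolP (i \in B).
    by rewrite (fintype.subsetP BA _ iB) addr0.
  by case: (i \in A); rewrite ?add0r // addrC subrK.
rewrite bigA_distr_bigA in E1.
rewrite -E1 (reindex (fun G : {set X} => [ffun x => x \in G])) /=; last first.
  exists (fun f : {ffun X -> bool} => [set x | f x]) => G _.
    by apply/setP => x; rewrite inE ffunE.
  by apply/ffunP => x; rewrite ffunE inE.
rewrite [X in _ <= X](bigID (fun G : {set X} => (G \subset A) && (B \subset G))) /=.
apply: ler_wpDr.
  by apply: sumr_ge0 => G _; apply: prodr_ge0 => i _.
apply: ler_sum => G /andP[GA BG].
rewrite (eq_bigr (fun i => if i \in G then p else if i \in A then 1 - p else 1)); last first.
  move=> i _; rewrite ffunE /a; case: ifP => iG; first by rewrite (fintype.subsetP GA _ iG).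
  by have -> : (i \in B) = false by apply/negbTE; apply: contraFN iG => /(fintype.subsetP BG).
rewrite (bigID (fun i => i \in G)) /=.
rewrite (eq_bigr (fun _ => p)); last by move=> i ->.
rewrite prodr_const (eq_bigr (fun i => if i \in A then 1 - p else 1)); last first.
  by move=> i /negbTE ->.
rewrite -big_mkcondr /= prodr_const.
suff -> : #|[pred i | (i \notin G) && (i \in A)]| = (#|A| - #|G|)%N by [].
rewrite -[in RHS](finset.setIidPr GA) -cardsD.
by apply: eq_card => i; rewrite !inE andbC.
Qed.

Lemma perc_witness (V : finType) (n : nat) (H : {set {set V}}) (G : {set {set 'I_n}}) :
  G \subset Kn n -> G != Kn n -> percolates H G ->
  exists d, exists f : {ffun V -> 'I_n},
    [/\ d \in H, injective f & copy_edges (H :\ d) f \subset G].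
Proof.
move=> GK GnK perc.
have [e0 e0K e0G] : exists2 e0, e0 \in Kn n & e0 \notin G.
  apply/subsetPn; apply: contra GnK => KG; by rewrite finset.eqEsubset GK KG.
have [t et] := perc e0 e0K.
have : ~~ (boot_step H G \subset G).
  apply: contra e0G => sub.
  have eq : iter t (boot_step H) G = G.
    elim: t {et} => //= t IH; rewrite IH; apply/eqP.
    by rewrite finset.eqEsubset sub /boot_step finset.subsetUl.
  by rewrite -eq.
move=> /subsetPn [e eS eG].
move: eS; rewrite /boot_step inE (negbTE eG) /= inE
  => /andP[_ /existsP[f /and3P[/injectiveP fi ecopy csub]]].
move: ecopy => /imsetP[d dH ed].
exists d, f; split => //.
apply/fintype.subsetP => x /imsetP[d' /setD1P[d'd d'H] ->].
have : f @: d' \in G :|: [set e].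
  by apply: (fintype.subsetP csub); apply: imset_f.
rewrite inE finset.in_set1 ed => /orP[//|/eqP].
by move=> /(imset_inj fi) dd; rewrite dd eqxx in d'd.
Qed.

Definition cands (V : finType) (n : nat) (D : {set {set V}}) : {set {set {set 'I_n}}} :=
  [set copy_edges D f | f : {ffun V -> 'I_n} in [pred f : {ffun V -> 'I_n} | injectiveb f]].

Arguments cands {V} n D.

Lemma card_copies (V : finType) (n : nat) (S : {set V}) (D : {set {set V}}) (i0 : 'I_n) :
  (forall d, d \in D -> d \subset S) ->
  (#|cands n D| <= n ^ #|S|)%N.
Proof.
move=> DS.
pose ext (g : {ffun {x : V | x \in S} -> 'I_n}) : V -> 'I_n :=
  fun x => if insub x is Some y then g y else i0.
pose Phi g := copy_edges D (ext g).
pose res (f : {ffun V -> 'I_n}) : {ffun {x : V | x \in S} -> 'I_n} := [ffun y => f (val y)].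
have sub : cands n D \subset Phi @: finset.setT.
  apply/fintype.subsetP => E /imsetP[f _ ->]; apply/imsetP; exists (res f) => //.
  rewrite /Phi /copy_edges; apply: eq_in_imset => d dD; apply: eq_in_imset => x xd.
  have xS := fintype.subsetP (DS d dD) x xd.
  rewrite /ext; case: insubP => [y _ yv|]; last by rewrite xS.
  by rewrite ffunE yv.
apply: leq_trans (subset_leq_card sub) _.
apply: leq_trans (leq_imset_card _ _) _.
rewrite cardsT card_ffun card_ord card_sig.
suff -> : #|[pred x | x \in S]| = #|S| by [].
by apply: eq_card.
Qed.

Lemma pow_bound (R : realType) (n s m : nat) (lam c p : R) :
  0 < lam -> (0 < n)%N -> (1 <= m)%N -> lam * s%:R <= m%:R -> 0 < c <= 1 ->
  0 <= p -> p <= c * (n%:R `^ (- lam^-1)) -> (n ^ s)%N%:R * p ^+ m <= c.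
Proof.
move=> l0 n0 m1 lsm /andP[c0 c1] p0 pb.
have n1 : 1 <= (n%:R : R) by rewrite ler1n.
set x := (n%:R : R) `^ (- lam^-1).
have x0 : 0 <= x by apply/ltW/powR_gt0; rewrite ltr0n.
have h1 : p ^+ m <= c * x ^+ m.
  apply: le_trans (lerXn2r m _ _ pb) _; rewrite ?nnegrE //.
    by rewrite mulr_ge0 // ltW.
  rewrite exprMn ler_wpM2r ?exprn_ge0 //.
  have c0w := ltW c0; rewrite -(prednK m1) exprS ler_piMr ?exprn_ile1 //.
have h2 : x ^+ m <= ((n%:R : R) ^+ s)^-1.
  rewrite -powR_mulrn // /x -powRrM -powR_mulrn ?ler0n // -powRN.
  apply: (ler_powR n1).
  rewrite mulNr lerN2 -(ler_pM2l l0) mulrA mulrV ?unitfE ?gt_eqF // mul1r.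
  exact: lsm.
rewrite natrX.
have ns0 : 0 < (n%:R : R) ^+ s by rewrite exprn_gt0 // ltr0n.
apply: le_trans (ler_wpM2l (ltW ns0) h1) _.
rewrite mulrCA -[X in _ <= X]mulr1; apply: ler_wpM2l; first exact: ltW c0.
apply: le_trans (ler_wpM2l (ltW ns0) h2) _.
by rewrite mulrV ?unitfE ?gt_eqF.
Qed.

Lemma ler_sum_term (R : realType) (I : finType) (P : pred I) (F : I -> R) j :
  P j -> (forall i, P i -> 0 <= F i) -> F j <= \sum_(i | P i) F i.
Proof.
move=> Pj F0; rewrite (bigD1 j) //= lerDl sumr_ge0 // => i /andP[Pi _].
exact: F0.
Qed.

Lemma main_bound (R : realType) (V : finType) (H : {set {set V}}) (n : nat) (p bnd : R)
  (Fd : {set V} -> {set V} * {set {set V}}) :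
  simple_graph H -> 0 <= p <= 1 -> (2 <= n)%N ->
  (forall d, d \in H -> (Fd d).2 \subset H :\ d) ->
  (forall d, d \in H -> forall e, e \in (Fd d).2 -> e \subset (Fd d).1) ->
  (forall d, d \in H -> (n ^ #|(Fd d).1|)%N%:R * p ^+ #|(Fd d).2| <= bnd) ->
  p <= bnd ->
  prob_perc n H p <= (#|H| + 1)%N%:R * bnd.
Proof.
move=> Hs /andP[p0 p1] n2 FH FS Fb pb.
have n0 : (0 < n)%N by apply: leq_trans n2.
have n1 : (1 < n)%N by apply: leq_trans n2.
pose i0 : 'I_n := Ordinal n0.
have q0 : 0 <= 1 - p by rewrite subr_ge0.
pose w (G : {set {set 'I_n}}) := p ^+ #|G| * (1 - p) ^+ (#|Kn n| - #|G|).
have w0 : forall G, 0 <= w G by move=> G; rewrite mulr_ge0 // exprn_ge0.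
have cK : forall d, d \in H -> forall E, E \in cands n (Fd d).2 ->
    E \subset Kn n /\ #|E| = #|(Fd d).2|.
  move=> d dH E /imsetP[f]; rewrite inE => /injectiveP fi ->; split.
    apply/fintype.subsetP => x /imsetP[e eD ->]; rewrite inE card_imset //.
    have : e \in H by move: (fintype.subsetP (FH d dH) e eD); rewrite inE => /andP[].
    by move/Hs ->.
  by rewrite card_imset //; apply: imset_inj.
have step1 : \sum_(G : {set {set 'I_n}} | G \subset Kn n)
   (if `[< percolates H G >] then p ^+ #|G| * (1 - p) ^+ (#|Kn n| - #|G|) else 0)
   <= \sum_(G : {set {set 'I_n}} | G \subset Kn n) (w G * (G == Kn n)%:R +
        \sum_(d in H) \sum_(E in cands n (Fd d).2) w G * (E \subset G)%:R).
  apply: ler_sum => G GK.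
  have rhs0 : 0 <= \sum_(d in H) \sum_(E in cands n (Fd d).2) w G * (E \subset G)%:R.
    by apply: sumr_ge0 => d _; apply: sumr_ge0 => E _; rewrite mulr_ge0.
  case: asboolP => [perc|_]; last by rewrite addr_ge0 // mulr_ge0.
  case: (eqVneq G (Kn n)) => [eGK|GnK].
    by rewrite eGK /= mulr1 [X in _ <= X + _]/w lerDl -eGK.
  have [d [f [dH fi sub]]] := @perc_witness _ _ _ _ GK GnK perc.
  rewrite mulr0 add0r.
  apply: le_trans (@ler_sum_term _ _ (fun i => i \in H) _ _ dH _); last first.
    by move=> i _; apply: sumr_ge0 => E _; rewrite mulr_ge0.
  apply: le_trans (@ler_sum_term _ _ (fun i => i \in cands n (Fd d).2) _ (copy_edges (Fd d).2 f) _ _); last first.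
  - by move=> E _; rewrite mulr_ge0.
  - by apply/imsetP; exists f => //; rewrite inE; apply/injectiveP.
  have -> : copy_edges (Fd d).2 f \subset G.
    by apply: fintype.subset_trans _ sub; apply: imsetS; exact: FH d dH.
  by rewrite mulr1.
apply: le_trans step1 _.
rewrite big_split /=.
have t1 : \sum_(G : {set {set 'I_n}} | G \subset Kn n) w G * (G == Kn n)%:R = w (Kn n).
  rewrite (bigD1 (Kn n)) //= eqxx mulr1 big1 ?addr0 // => G /andP[_ /negbTE ->].
  by rewrite mulr0.
rewrite t1 exchange_big /=.
have t2 : forall d, d \in H -> \sum_(G : {set {set 'I_n}} | G \subset Kn n)
     \sum_(E in cands n (Fd d).2) w G * (E \subset G)%:R <= bnd.
  move=> d dH; rewrite exchange_big /=.
  apply: le_trans (_ : \sum_(E in cands n (Fd d).2) p ^+ #|(Fd d).2| <= _).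
    apply: ler_sum => E EC; have [EK cE] := cK d dH E EC.
    rewrite -cE; apply: le_trans (up_sum _ _ _ _ p _ EK); last by rewrite p0 p1.
    rewrite big_mkcondr /=; apply: ler_sum => G _.
    by case: (E \subset G); rewrite ?mulr1 ?mulr0.
  rewrite sumr_const -mulr_natl; apply: le_trans (Fb d dH).
  apply: ler_wpM2r; first exact: exprn_ge0.
  by rewrite ler_nat; apply: (@card_copies _ _ _ _ i0) => e; apply: FS.
have t3 : \sum_(d in H) \sum_(G : {set {set 'I_n}} | G \subset Kn n)
     \sum_(E in cands n (Fd d).2) w G * (E \subset G)%:R <= \sum_(d in H) bnd.
  by apply: ler_sum.
rewrite sumr_const in t3.
have N1 : (0 < #|Kn n|)%N.
  apply/card_gt0P; exists [set i0; Ordinal n1]; rewrite inE cards2.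
  by [].
have wK : w (Kn n) <= bnd.
  rewrite /w subnn expr0 mulr1 -(prednK N1) exprS; apply: le_trans _ pb.
  by rewrite ler_piMr ?exprn_ile1.
apply: le_trans (lerD wK t3) _.
by rewrite mulr_natl mulrnDr mulr1n addrC.
Qed.

From mathcomp Require Import lra.

Theorem proposition5p2 (R : realType) (V : finType) (H : {set {set V}}) :
  simple_graph H -> (1 < #|H|)%N ->
  exists c : R, 0 < c /\
    forall n : nat, (2 <= n)%N ->
      c * ((n%:R : R) `^ (- (lambda_star R H)^-1)) <= p_c R n H.
Proof.
move=> Hs H1.
set lam := lambda_star R H.
pose dens (F : {set V} * {set {set V}}) : R := (#|F.2|)%:R / (#|F.1|)%:R.
pose cond (d : {set V}) (F : {set V} * {set {set V}}) :=
  [&& F.1 != finset.set0, F.2 \subset H :\ d & [forall x in F.2, x \subset F.1]].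
have H0 : (0 < #|H|)%N by apply: ltnW.
have /card_gt0P [d0 d0H] := H0.
have V0 : (0 < #|V|)%N by apply: leq_trans (max_card (mem d0)); rewrite (Hs d0 d0H).
have mpos : forall d, d \in H -> 0 < maxdens R H d.
  move=> d dH.
  have : dens (finset.setT, H :\ d) <= maxdens R H d.
    apply: le_bigmax_cond => /=; apply/and3P; split.
    - by rewrite -card_gt0 cardsT.
    - by [].
    - by apply/forall_inP => y _; apply: finset.subsetT.
  apply: lt_le_trans; rewrite /dens /= divr_gt0 // ltr0n ?cardsT //.
  by move: H1; rewrite (cardsD1 d) dH.
have lam0 : 0 < lam.
  rewrite /lam /lambda_star; apply: lt_bigmin; first by rewrite ltr0n.
  exact: mpos.
have Fex : forall d, d \in H -> [exists F, cond d F && (lam <= dens F)].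
  move=> d dH; case: (boolP [exists F, cond d F && (lam <= dens F)]) => // /existsPn nF; exfalso.
  have : maxdens R H d < lam.
    rewrite /maxdens; apply: bigmax_lt => // F cF.
    by move: (nF F); rewrite /cond cF /= -ltNge.
  have hl : lam <= maxdens R H d by rewrite /lam /lambda_star; apply: bigmin_le_cond.
  by rewrite ltNge hl.
pose Fd d := odflt (finset.setT, finset.set0) [pick F | cond d F && (lam <= dens F)].
have FdP : forall d, d \in H -> cond d (Fd d) && (lam <= dens (Fd d)).
  move=> d dH; rewrite /Fd; case: pickP => [F //|none].
  by move/existsP: (Fex d dH) => [F]; rewrite none.
set c : R := ((4 * (#|H| + 1))%N%:R)^-1.
have c0 : 0 < c by rewrite invr_gt0 ltr0n muln_gt0 addn1.
have c1 : c <= 1.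
  rewrite invf_le1; last by rewrite ltr0n muln_gt0 addn1.
  by rewrite ler1n muln_gt0 addn1.
exists c; split => // n n2.
have n0 : (0 < n)%N by apply: leq_trans n2.
set x := (n%:R : R) `^ (- lam^-1).
have x1 : x <= 1.
  have n1 : 1 <= (n%:R : R) by rewrite ler1n.
  rewrite /x -[X in _ <= X](powRr0 (n%:R : R)); apply: (ler_powR n1).
  by rewrite oppr_le0 invr_ge0 ltW.
apply: lb_le_inf.
  exists 1; split; first by rewrite ler01 lexx.
  rewrite /prob_perc (bigD1 (Kn n)) //=.
  case: asboolP => [_|nperc]; last first.
    by exfalso; apply: nperc => e eK; exists 0%N.
  rewrite expr1n subnn expr0 mulr1.
  apply: le_trans (_ : 1 <= _); first by rewrite invf_le1 ?ltr0n // ler1n.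
  rewrite lerDl sumr_ge0 // => G _; case: ifP => _ //.
  by rewrite mulr_ge0 ?exprn_ge0 // subrr.
move=> p [/andP[p0 p1] hp]; rewrite leNgt; apply/negP => plt.
have pc : p <= c by apply: le_trans (ltW plt) _; rewrite ler_piMr // ltW.
have p01 : 0 <= p <= 1 by rewrite p0 p1.
have FH : forall d, d \in H -> (Fd d).2 \subset H :\ d.
  by move=> d /FdP /andP[/and3P[]].
have FS : forall d, d \in H -> forall e, e \in (Fd d).2 -> e \subset (Fd d).1.
  by move=> d /FdP /andP[/and3P[_ _ /forall_inP h] _].
have Fb : forall d, d \in H -> (n ^ #|(Fd d).1|)%N%:R * p ^+ #|(Fd d).2| <= c.
  move=> d /FdP /andP[/and3P[ne _ _] ld].
  have s0 : (0 < #|(Fd d).1|)%N by rewrite card_gt0.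
  have lsm : lam * #|(Fd d).1|%:R <= #|(Fd d).2|%:R by rewrite -ler_pdivlMr ?ltr0n.
  have m1 : (1 <= #|(Fd d).2|)%N.
    have : 0 < lam * #|(Fd d).1|%:R by rewrite mulr_gt0 // ltr0n.
    by move=> h; rewrite -(ltr0n R); apply: lt_le_trans h lsm.
  by apply: pow_bound lam0 n0 m1 lsm _ p0 (ltW plt); rewrite c0 c1.
have hb := @main_bound R V H n p c Fd Hs p01 n2 FH FS Fb pc.
have e : (#|H| + 1)%N%:R * c = 4^-1.
  rewrite /c natrM invfM mulrCA mulfV ?mulr1 //.
  by rewrite pnatr_eq0 addn1.
rewrite e in hb.
lra.
Qed.
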